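(* An eventually dendric shift space is minimal if and only if it is irreducible.
   Context: $A$ is a finite alphabet; a shift space is a closed subset $X\subseteq A^{\mathbb Z}$ with $\sigma(X)=X$; $\mathcal L(X)$ is its set of finite factors. $X$ is irreducible if for all $u,v\in\mathcal L(X)$ there is $w$ with $uwv\in\mathcal L(X)$. A nonempty shift space is minimal if it contains no nonempty shift space other than itself. For $w\in\mathcal L(X)$, the extension graph $\mathcal E_1(w)$ is the undirected bipartite graph with vertex set the disjoint union of $\{a\in A: aw\in\mathcal L(X)\}$ and $\{b\in A: wb\in\mathcal L(X)\}$, with an edge $(a,b)$ iff $awb\in\mathcal L(X)$; $X$ is eventually dendric if for some $m\ge0$, $\mathcal E_1(w)$ is a tree for every $w\in\mathcal L(X)$ of length $\ge m$. *)

(* Defs.v *)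
From HB Require Import structures.
From mathcomp Require Import all_boot all_order all_algebra.
Set Implicit Arguments. Unset Strict Implicit. Unset Printing Implicit Defensive.
Import GRing.Theory Num.Theory.
Local Open Scope ring_scope.

Section Shifts.
Variable A : finType.

Definition shift (x : int -> A) : int -> A := fun n => x (n + 1).

(* closed for the product topology: a point all of whose central windows
   x_[-n,n] are windows of points of X belongs to X *)
Definition closed_set (X : (int -> A) -> Prop) : Prop :=
  forall x : int -> A,
    (forall n : nat, exists y, X y /\ forall i : int, `|i|%N <= n -> y i = x i)%N ->
    X x.

Definition shift_invariant (X : (int -> A) -> Prop) : Prop :=
  (forall x, X x -> X (shift x)) /\
  (forall y, X y -> exists x, X x /\ shift x = y).

Definition shift_space (X : (int -> A) -> Prop) : Prop :=
  closed_set X /\ shift_invariant X.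

Definition factor (x : int -> A) (i : int) (n : nat) : seq A :=
  [seq x (i + k%:Z) | k <- iota 0 n].

Definition lang (X : (int -> A) -> Prop) (w : seq A) : Prop :=
  exists x, exists i : int, X x /\ w = factor x i (size w).

Definition irreducible (X : (int -> A) -> Prop) : Prop :=
  forall u v, lang X u -> lang X v -> exists w, lang X (u ++ w ++ v).

Definition minimal (X : (int -> A) -> Prop) : Prop :=
  (exists x, X x) /\
  forall Y : (int -> A) -> Prop, shift_space Y -> (exists y, Y y) ->
    (forall y, Y y -> X y) -> forall x, X x -> Y x.

(* Extension graph E_1(w): vertices inl a (left extensions a) and
   inr b (right extensions b), edge between inl a and inr b iff awb in L(X). *)
Definition ext_vertex (X : (int -> A) -> Prop) (w : seq A) (u : A + A) : Prop :=
  match u with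
  | inl a => lang X (a :: w)
  | inr b => lang X (rcons w b)
  end.

Definition ext_edge (X : (int -> A) -> Prop) (w : seq A) (u v : A + A) : Prop :=
  match u, v with
  | inl a, inr b => lang X (a :: rcons w b)
  | inr b, inl a => lang X (a :: rcons w b)
  | _, _ => False
  end.
End Shifts.

Section Graphs.
Variable T : eqType.
Variables (V : T -> Prop) (E : T -> T -> Prop).

Fixpoint walk (x : T) (s : seq T) : Prop :=
  match s with
  | [::] => True
  | y :: s' => E x y /\ walk y s'
  end.

Definition connected_graph : Prop :=
  forall u v, V u -> V v -> exists s, walk u s /\ last u s = v.

Definition acyclic_graph : Prop :=
  ~ exists (x : T) (s : seq T),
      uniq (x :: s) /\ (2 <= size s)%N /\ walk x (rcons s x).

Definition is_tree : Prop := connected_graph /\ acyclic_graph.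
End Graphs.

Definition eventually_dendric (A : finType) (X : (int -> A) -> Prop) : Prop :=
  exists m : nat, forall w : seq A, lang X w -> (m <= size w)%N ->
    is_tree (ext_vertex X w) (ext_edge X w).

(* Main.v *)
Require Import Defs.
From mathcomp Require Import all_boot all_order all_algebra.
From mathcomp Require Import zify.
From Stdlib Require Import Classical FunctionalExtensionality.
From Stdlib Require ClassicalDescription ClassicalEpsilon.
Set Implicit Arguments. Unset Strict Implicit. Unset Printing Implicit Defensive.

Definition pb (P : Prop) : bool := if ClassicalDescription.excluded_middle_informative P then true else false.
Lemma pbP (P : Prop) : reflect P (pb P).
Proof. rewrite /pb; case: ClassicalDescription.excluded_middle_informative => h; constructor; done. Qed.
Lemma pbT (P : Prop) : P -> pb P = true.
Proof. by move=> h; apply/pbP. Qed.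
Lemma pbF (P : Prop) : ~ P -> pb P = false.
Proof. by move=> h; apply/pbP. Qed.

Section G.
Variable T : finType.
Variable E : T -> T -> Prop.

Lemma walk_cat x s t : walk E x (s ++ t) <-> walk E x s /\ walk E (last x s) t.
Proof.
elim: s x => [|y s IH] x /=; first by tauto.
rewrite IH; tauto.
Qed.

Hypothesis Esym : forall x y, E x y -> E y x.
Hypothesis Eirr : forall x, ~ E x x.

Lemma leaf_exists : acyclic_graph E -> (exists x y, E x y) ->
  exists v u, E v u /\ forall u', E v u' -> u' = u.
Proof.
move=> Hac [x0 [y0 E0]].
apply: NNPP => H.
have Hn : forall v u, E v u -> exists u', E v u' /\ u' <> u.
  move=> v u Evu; apply: NNPP => H1; apply: H; exists v, u; split => // u' Eu'.
  by apply: NNPP => H2; apply: H1; exists u'.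
have Hk : forall k, exists e p s, [/\ uniq (e :: p :: s), walk E e (p :: s) & size s = k].
  elim=> [|k [e [p [s [Hu Hw Hs]]]]].
    exists x0, y0, [::]; split => //=.
    rewrite inE andbT; apply/eqP => h; subst; exact: Eirr E0.
  have [Eep _] := Hw.
  have [z [Eez zp]] := Hn _ _ Eep.
  case: (boolP (z \in e :: p :: s)) => zin.
    exfalso; apply: Hac.
    have ze : z <> e by move=> h; subst; exact: Eirr Eez.
    have zs : z \in s.
      move: zin; rewrite !inE => /orP [/eqP h|/orP [/eqP h|//]]; [by case: ze | by case: zp].
    have : exists s1 s2, s = s1 ++ z :: s2.
      by exists (take (index z s) s), (drop (index z s).+1 s); rewrite -{1}(cat_take_drop (index z s) s) (drop_nth z) ?index_mem // nth_index.
    move=> [s1 [s2 Hs12]]; subst s.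
    exists e, (p :: rcons s1 z); split.
      rewrite -cats1.
      move: Hu; have -> : e :: p :: s1 ++ z :: s2 = (e :: p :: s1 ++ [:: z]) ++ s2 by rewrite /= -catA.
      by rewrite cat_uniq => /andP [].
    split; first by rewrite /= size_rcons.
    have -> : rcons (p :: rcons s1 z) e = (p :: s1 ++ [:: z]) ++ [:: e] by rewrite -!cats1 /= -catA.
    apply/walk_cat; split.
      move: Hw; have -> : p :: s1 ++ z :: s2 = (p :: s1 ++ [:: z]) ++ s2 by rewrite /= -catA.
      by case/walk_cat.
    by rewrite /= last_cat /=; split => //; apply: Esym.
  exists z, e, (p :: s); split; [by rewrite cons_uniq zin Hu | by split => //; apply: Esym | by rewrite /= Hs].
have [e [p [s [Hu _ Hs]]]] := Hk (size (enum T)).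
have h2 : size (e :: p :: s) <= size (enum T).
  by apply: (uniq_leq_size Hu) => z _; rewrite mem_enum.
move: h2; rewrite /= Hs => h; have := ltn_trans (ltnSn _) h; by rewrite ltnn.
Qed.

End G.

Lemma walk_mono (T : eqType) (E E' : T -> T -> Prop) :
  (forall x y, E x y -> E' x y) -> forall x s, walk E x s -> walk E' x s.
Proof. move=> h x s; elim: s x => [|y s IH] x //= [h1 h2]; split; auto. Qed.

Lemma acyclic_mono (T : eqType) (E E' : T -> T -> Prop) :
  (forall x y, E x y -> E' x y) -> acyclic_graph E' -> acyclic_graph E.
Proof.
move=> h H [x [s [h1 [h2 h3]]]]; apply: H; exists x, s; split => //; split => //.
exact: walk_mono h3.
Qed.

Lemma sum_pick (T : finType) (v : T) (f : T -> nat) :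
  \sum_(x : T) (x == v) * f x = f v.
Proof.
rewrite (bigD1 v) //= eqxx mul1n big1 ?addn0 // => x /negbTE ->; by rewrite mul0n.
Qed.

Lemma forest_bound (T : finType) k : forall (V : T -> Prop) (E : T -> T -> Prop),
  \sum_(x : T) pb (V x) = k ->
  (forall x y, E x y -> E y x) -> (forall x, ~ E x x) -> (forall x y, E x y -> V x) ->
  acyclic_graph E -> (exists x, V x) ->
  \sum_(x : T) \sum_(y : T) pb (E x y) + 2 <= 2 * \sum_(x : T) pb (V x).
Proof.
elim: k => [|k IH] V E HV Esym Eirr EV Hac [x0 Vx0].
  by move: HV; rewrite (bigD1 x0) //= pbT.
case: (classic (exists x y, E x y)) => [Hex|Hno]; last first.
  rewrite big1 ?HV; first lia.
  move=> x _; apply: big1 => y _; rewrite pbF // => h; apply: Hno; exists x, y; exact h.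
have [v [u [Evu Hu]]] := leaf_exists Esym Eirr Hac Hex.
pose V' x := V x /\ x <> v.
pose E' x y := E x y /\ x <> v /\ y <> v.
have Vv : V v := EV _ _ Evu.
have HV' : \sum_x pb (V x) = (\sum_x pb (V' x)).+1.
  rewrite (bigD1 v) //= [in RHS](bigD1 v) //= (pbT Vv) (@pbF (V' v)); last by case.
  rewrite add0n add1n; congr S; apply: eq_bigr => x /eqP xv.
  by case: (pbP (V x)) => h; [rewrite pbT | rewrite pbF //; case].
have deg1 : \sum_y pb (E v y) = 1.
  rewrite (bigD1 u) //= pbT // big1 // => y yu; rewrite pbF // => h.
  by move: yu; rewrite (Hu _ h) eqxx.
have deg2 : \sum_x pb (E x v) = 1.
  rewrite (bigD1 u) //= pbT; last exact: Esym.
  rewrite big1 // => y yu; rewrite pbF // => h.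
  by move: yu; rewrite (Hu _ (Esym _ _ h)) eqxx.
have HE : \sum_x \sum_y pb (E x y) = (\sum_x \sum_y pb (E' x y)) + 2.
  have pw : forall x y, (pb (E x y) : nat) = pb (E' x y) + (x == v) * pb (E x y) + (y == v) * pb (E x y).
    move=> x y; case: (pbP (E x y)) => h; last by rewrite pbF ?muln0 //; case.
    case: (eqVneq x v) => [xv|xv].
      subst x; rewrite pbF; last by case=> _ [].
      case: (eqVneq y v) => [yv|//]; subst y; by case: (Eirr _ h).
    case: (eqVneq y v) => [yv|yv].
      by rewrite pbF //; case=> _ [].
    by rewrite pbT //; split => //; split; apply/eqP.
  rewrite (eq_bigr (fun x => \sum_y pb (E' x y) + (x == v) * \sum_y pb (E x y) + \sum_y (y == v) * pb (E x y))); last first.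
    move=> x _; rewrite big_distrr /= -!big_split /=; apply: eq_bigr => y _; exact: pw.
  rewrite !big_split /= sum_pick deg1.
  have -> : \sum_x \sum_y (y == v) * pb (E x y) = 1.
    rewrite exchange_big /= -deg2 -(sum_pick v (fun y => \sum_x pb (E x y))).
    by apply: eq_bigr => y _; rewrite big_distrr.
  by rewrite -addnA.
have Vu : V u := EV _ _ (Esym _ _ Evu).
have uv : u <> v by move=> h; subst; exact: Eirr Evu.
have h : \sum_x \sum_y pb (E' x y) + 2 <= 2 * \sum_x pb (V' x).
apply: IH.
- by move: HV; rewrite HV' => -[].
- by move=> x y [h [h1 h2]]; split; [apply: Esym | split].
- by move=> x [h _]; exact: Eirr _ h.
- by move=> x y [h [h1 h2]]; split => //; apply: EV _ _ h.
- by apply: (acyclic_mono _ Hac) => x y [].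
- by exists u.
rewrite HE HV'; lia.
Qed.

Lemma bip_bound (A : finType) (E : A + A -> A + A -> Prop) (V : A + A -> Prop) :
  (forall x y, E x y -> E y x) ->
  (forall a a', ~ E (inl a) (inl a')) -> (forall b b', ~ E (inr b) (inr b')) ->
  (forall x y, E x y -> V x) -> acyclic_graph E -> (exists x, V x) ->
  \sum_(a : A) \sum_(b : A) pb (E (inl a) (inr b)) + 1 <=
  \sum_(a : A) pb (V (inl a)) + \sum_(b : A) pb (V (inr b)).
Proof.
move=> Esym Hl Hr EV Hac Hex.
have Eirr : forall x, ~ E x x by case=> [a|b]; [exact: Hl | exact: Hr].
have := forest_bound (erefl _) Esym Eirr EV Hac Hex.
rewrite !big_sumType /=.
have -> : \sum_(a : A) \sum_y pb (E (inl a) y)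
  = \sum_(a : A) \sum_(b : A) pb (E (inl a) (inr b)).
  apply: eq_bigr => a _; rewrite big_sumType /= big1 ?add0n // => i _; by rewrite pbF.
have -> : \sum_(b : A) \sum_y pb (E (inr b) y)
  = \sum_(a : A) \sum_(b : A) pb (E (inl a) (inr b)).
  rewrite [RHS]exchange_big /=; apply: eq_bigr => b _; rewrite big_sumType /= [X in _ + X]big1 ?addn0.
    apply: eq_bigr => a _.
    by case: (pbP (E (inl a) (inr b))) => h; [rewrite pbT //; apply: Esym | rewrite pbF // => /Esym].
  by move=> i _; rewrite pbF.
lia.
Qed.

Section Words.
Variable A : finType.

Lemma size_factor (x : int -> A) i n : size (factor x i n) = n.
Proof. by rewrite /factor size_map size_iota. Qed.

Lemma factor_add (x : int -> A) i n1 n2 :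
  factor x i (n1 + n2) = factor x i n1 ++ factor x (i + n1%:Z)%R n2.
Proof.
rewrite /factor iotaD map_cat; congr (_ ++ _).
have -> : iota (0 + n1) n2 = map (addn n1) (iota 0 n2) by rewrite add0n -iotaDl addn0.
rewrite -map_comp; apply: eq_map => k /=.
by rewrite PoszD GRing.addrA.
Qed.

Lemma factor_drop (x : int -> A) i n l :
  drop l (factor x i n) = factor x (i + l%:Z)%R (n - l).
Proof.
case: (leqP l n) => hl.
  by rewrite -{1}(subnKC hl) factor_add drop_size_cat // size_factor.
rewrite drop_oversize ?size_factor ?(ltnW hl) //.
by have -> : n - l = 0 by apply/eqP; rewrite subn_eq0 ltnW.
Qed.

Lemma factor_take (x : int -> A) i n l :
  take l (factor x i n) = factor x i (minn l n).
Proof.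
case: (leqP l n) => hl.
  by rewrite -{1}(subnKC hl) factor_add take_size_cat // size_factor.
by rewrite take_oversize ?size_factor ?(ltnW hl).
Qed.

Lemma factor_rcons (x : int -> A) i n :
  factor x i n.+1 = rcons (factor x i n) (x (i + n%:Z)%R).
Proof. by rewrite -addn1 factor_add cats1 /factor /= GRing.addr0. Qed.

Lemma factor_cons (x : int -> A) i n :
  factor x i n.+1 = x i :: factor x (i + 1)%R n.
Proof. by rewrite -add1n factor_add /factor /= GRing.addr0. Qed.

Lemma nth_factor (x : int -> A) i n k d : k < n -> nth d (factor x i n) k = x (i + k%:Z)%R.
Proof. by move=> hk; rewrite /factor (nth_map 0) ?size_iota // nth_iota. Qed.

Definition occ (x : int -> A) (w : seq A) := exists i, w = factor x i (size w).

Lemma occ_drop x w l : occ x w -> occ x (drop l w).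
Proof.
move=> [i ->]; rewrite factor_drop; exists (i + l%:Z)%R; by rewrite size_factor.
Qed.

Lemma occ_take x w l : occ x w -> occ x (take l w).
Proof.
move=> [i ->]; rewrite factor_take; exists i; by rewrite size_factor.
Qed.

Lemma occ_cat x u v : occ x (u ++ v) -> occ x u /\ occ x v.
Proof.
move=> h; split.
  by have := occ_take (size u) h; rewrite take_size_cat.
by have := occ_drop (size u) h; rewrite drop_size_cat.
Qed.

Lemma occ_cons x a w : occ x (a :: w) -> occ x w.
Proof. by move=> /(occ_cat (u := [:: a])) []. Qed.

Lemma occ_rcons x w b : occ x (rcons w b) -> occ x w.
Proof. by rewrite -cats1 => /occ_cat []. Qed.

Lemma occ_extl x w : occ x w -> exists a, occ x (a :: w).
Proof.
move=> [i hw]; exists (x (i - 1)%R); exists (i - 1)%R.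
by rewrite /= factor_cons GRing.subrK -hw.
Qed.

Lemma occ_extr x w : occ x w -> exists b, occ x (rcons w b).
Proof.
move=> [i hw]; exists (x (i + (size w)%:Z)%R); exists i.
by rewrite size_rcons factor_rcons -hw.
Qed.

Lemma lang_occ (X : (int -> A) -> Prop) w : lang X w <-> exists x, X x /\ occ x w.
Proof.
split; first by move=> [x [i [Xx hw]]]; exists x; split => //; exists i.
by move=> [x [Xx [i hw]]]; exists x, i.
Qed.

Lemma lang_cat (X : (int -> A) -> Prop) u v : lang X (u ++ v) -> lang X u /\ lang X v.
Proof.
move/lang_occ=> [x [Xx /occ_cat [h1 h2]]]; split; apply/lang_occ; by exists x.
Qed.

Lemma lang_sub (X : (int -> A) -> Prop) w l : lang X w -> lang X (drop l w) /\ lang X (take l w).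
Proof.
move/lang_occ=> [x [Xx h]]; split; apply/lang_occ; exists x; split => //.
  exact: occ_drop. exact: occ_take.
Qed.

Lemma lang_cons (X : (int -> A) -> Prop) a w : lang X (a :: w) -> lang X w.
Proof. by move=> /(lang_cat (u := [:: a])) []. Qed.

Lemma lang_rcons (X : (int -> A) -> Prop) w b : lang X (rcons w b) -> lang X w.
Proof. by rewrite -cats1 => /lang_cat []. Qed.

End Words.

Section Count.
Variable A : finType.

Fixpoint W (n : nat) : seq (seq A) :=
  if n is n'.+1 then [seq rcons w b | w <- W n', b <- index_enum A] else [:: [::]].

Lemma sumW_r n (f : seq A -> nat) :
  \sum_(v <- W n.+1) f v = \sum_(w <- W n) \sum_(b : A) f (rcons w b).
Proof. by rewrite /= big_allpairs_dep. Qed.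

Lemma sumW_l n (f : seq A -> nat) :
  \sum_(v <- W n.+1) f v = \sum_(w <- W n) \sum_(a : A) f (a :: w).
Proof.
elim: n f => [|n IH] f; first by rewrite sumW_r !big_seq1.
rewrite sumW_r IH sumW_r; apply: eq_bigr => w _.
by rewrite exchange_big.
Qed.

Lemma mem_W n w : size w = n -> w \in W n.
Proof.
elim: n w => [|n IH] w; first by move/eqP; rewrite size_eq0 => /eqP ->; rewrite inE.
case/lastP: w => [//|w b]; rewrite size_rcons => -[hw].
apply/allpairsP; exists (w, b); split => //=; [exact: IH | exact: mem_index_enum].
Qed.

Lemma sum_ge (s : seq (seq A)) (f : seq A -> nat) x0 : x0 \in s -> f x0 <= \sum_(x <- s) f x.
Proof. by move=> h; rewrite (big_rem x0) //= leq_addr. Qed.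

End Count.

Lemma pb_and3 (P Q R : Prop) : pb (P /\ Q /\ R) = [&& pb P, pb Q & pb R].
Proof.
case: (pbP P) => hP; case: (pbP Q) => hQ; case: (pbP R) => hR /=;
  by [rewrite pbT | rewrite pbF // => -[? [? ?]]].
Qed.

Lemma pw_main (fw fa fb fab lab : bool) : (fab -> fa) -> (fab -> fb) -> (fab -> lab) ->
  fb * (lab && ~~ fab) + fa * (lab && ~~ fab) + fw * [&& lab, ~~ fa & ~~ fb] + 2 * fab
  <= lab + [&& lab, fa & fb].
Proof.
case: fab => [/(_ isT) -> /(_ isT) -> /(_ isT) ->|_ _ _]; by case: fw; case: fa; case: fb; case: lab.
Qed.

Lemma pw_split (f l : bool) : (f -> l) -> (l : nat) = f + (l && ~~ f).
Proof. by case: f => [/(_ isT) ->|]; case: l. Qed.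

Section Main.
Variable A : finType.
Variables (L F : seq A -> Prop).
Hypothesis HFL : forall w, F w -> L w.
Hypothesis HFc : forall a w, F (a :: w) -> F w.
Hypothesis HFr : forall w b, F (rcons w b) -> F w.
Hypothesis HLc : forall a w, L (a :: w) -> L w.
Hypothesis HLr : forall w b, L (rcons w b) -> L w.
Hypothesis HFextl : forall w, F w -> exists a, F (a :: w).
Hypothesis HFextr : forall w, F w -> exists b, F (rcons w b).
Variable m : nat.
Definition Ew (w : seq A) (x y : A + A) : Prop :=
  match x, y with
  | inl a, inr b => L (a :: rcons w b)
  | inr b, inl a => L (a :: rcons w b)
  | _, _ => False
  end.
Hypothesis Hac : forall w, F w -> m <= size w -> acyclic_graph (Ew w).

Notation bF w := (pb (F w)).
Notation bL w := (pb (L w)).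

Definition P n := \sum_(w <- W A n) bF w.
Definition lN w := \sum_(a : A) (bL (a :: w) && ~~ bF (a :: w)).
Definition rN w := \sum_(b : A) (bL (rcons w b) && ~~ bF (rcons w b)).
Definition Bn n := \sum_(w <- W A n) bF w * (lN w + rN w).
Definition NNw w := \sum_(a : A) \sum_(b : A)
   [&& bL (a :: rcons w b), ~~ bF (a :: w) & ~~ bF (rcons w b)].
Definition NN n := \sum_(w <- W A n) bF w * NNw w.

Lemma FB1 w : F w -> m <= size w ->
  \sum_(a : A) \sum_(b : A) bL (a :: rcons w b) + 1 <=
  \sum_(a : A) bL (a :: w) + \sum_(b : A) bL (rcons w b).
Proof.
move=> Fw hm.
pose V (x : A + A) := match x with inl a => L (a :: w) | inr b => L (rcons w b) end.
have := @bip_bound A (Ew w) V.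
apply.
- by case=> [a|b] [a'|b'] //=.
- by move=> a a' [].
- by move=> b b' [].
- case=> [a|b] [a'|b'] //= h.
    by apply: (HLr (b := b')).
  exact: (HLc h).
- exact: Hac.
- have [a Fa] := HFextl Fw; exists (inl a); exact: HFL.
Qed.

Lemma FB2 w : F w -> m <= size w ->
  \sum_(a : A) \sum_(b : A) [&& bL (a :: rcons w b), bF (a :: w) & bF (rcons w b)] + 1 <=
  \sum_(a : A) bF (a :: w) + \sum_(b : A) bF (rcons w b).
Proof.
move=> Fw hm.
pose V (x : A + A) := match x with inl a => F (a :: w) | inr b => F (rcons w b) end.
pose E' x y := Ew w x y /\ V x /\ V y.
have := @bip_bound A E' V.
rewrite /E' /=.
have -> : \sum_(a : A) \sum_(b : A) pb (Ew w (inl a) (inr b) /\ F (a :: w) /\ F (rcons w b)) =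
  \sum_(a : A) \sum_(b : A) [&& bL (a :: rcons w b), bF (a :: w) & bF (rcons w b)].
  by apply: eq_bigr => a _; apply: eq_bigr => b _; rewrite pb_and3.
apply.
- by move=> x y [h [h1 h2]]; split => //; case: x y h {h1 h2} => [a|b] [a'|b'].
- by move=> a a' [].
- by move=> b b' [].
- by move=> x y [_ []].
- apply: (acyclic_mono (E' := Ew w)); first by move=> x y [].
  exact: Hac.
- have [a Fa] := HFextl Fw; by exists (inl a).
Qed.

End Main.

Section Main2.
Variable A : finType.
Variables (L F : seq A -> Prop).
Hypothesis HFL : forall w, F w -> L w.
Hypothesis HFc : forall a w, F (a :: w) -> F w.
Hypothesis HFr : forall w b, F (rcons w b) -> F w.
Hypothesis HLc : forall a w, L (a :: w) -> L w.
Hypothesis HLr : forall w b, L (rcons w b) -> L w.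
Hypothesis HFextl : forall w, F w -> exists a, F (a :: w).
Hypothesis HFextr : forall w, F w -> exists b, F (rcons w b).
Variable m : nat.
Hypothesis Hac : forall w, F w -> m <= size w -> acyclic_graph (Ew L w).

Notation bF w := (pb (F w)).
Notation bL w := (pb (L w)).

Definition t1 w a b : nat := bF (rcons w b) * (bL (a :: rcons w b) && ~~ bF (a :: rcons w b)).
Definition t2 w a b : nat := bF (a :: w) * (bL (a :: rcons w b) && ~~ bF (a :: rcons w b)).
Definition t3 w a b : nat := bF w * [&& bL (a :: rcons w b), ~~ bF (a :: w) & ~~ bF (rcons w b)].
Definition t4 w a b : nat := bF (a :: rcons w b).
Definition S3 (t : seq A -> A -> A -> nat) w := \sum_(a : A) \sum_(b : A) t w a b.

Lemma per_w w : m <= size w ->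
  S3 t1 w + S3 t2 w + S3 t3 w + 2 * S3 t4 w + 2 * bF w <=
  2 * \sum_(a : A) bF (a :: w) + 2 * \sum_(b : A) bF (rcons w b) + bF w * (lN L F w + rN L F w).
Proof.
move=> hm.
case: (pbP (F w)) => Fw; last first.
  have hwa : forall a, bF (a :: w) = false by move=> a; rewrite pbF // => /HFc.
  have hwb : forall b, bF (rcons w b) = false by move=> b; rewrite pbF // => /HFr.
  have hwab : forall a b, bF (a :: rcons w b) = false by move=> a b; rewrite pbF // => /HFc/HFr.
  have z : forall t, (forall a b, t w a b = 0) -> S3 t w = 0.
    by move=> t ht; apply: big1 => a _; apply: big1 => b _; exact: ht.
  rewrite !z ?(pbF Fw) // => a b; by rewrite /t1 /t2 /t3 /t4 ?hwa ?hwb ?hwab ?(pbF Fw) ?muln0.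
have h1 := FB1 HFL HLc HLr HFextl Hac Fw hm.
have h2 := FB2 HFextl Hac Fw hm.
have hs : S3 t1 w + S3 t2 w + S3 t3 w + 2 * S3 t4 w <=
   \sum_(a : A) \sum_(b : A) bL (a :: rcons w b) +
   \sum_(a : A) \sum_(b : A) [&& bL (a :: rcons w b), bF (a :: w) & bF (rcons w b)].
  rewrite /S3 big_distrr /= -!big_split /=; apply: leq_sum => a _.
  rewrite big_distrr /= -!big_split /=; apply: leq_sum => b _.
  apply: pw_main.
  - by move/pbP => h; apply/pbP; apply: (HFr (w := a :: w) h).
  - by move/pbP => h; apply/pbP; apply: (HFc h).
  - by move/pbP => h; apply/pbP; apply: HFL.
have e1 : \sum_(a : A) (bL (a :: w) : nat) = \sum_(a : A) bF (a :: w) + lN L F w.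
  rewrite /lN -big_split /=; apply: eq_bigr => a _; apply: pw_split.
  by move/pbP => h; apply/pbP; apply: HFL.
have e2 : \sum_(b : A) (bL (rcons w b) : nat) = \sum_(b : A) bF (rcons w b) + rN L F w.
  rewrite /rN -big_split /=; apply: eq_bigr => b _; apply: pw_split.
  by move/pbP => h; apply/pbP; apply: HFL.
rewrite mul1n.
lia.
Qed.

End Main2.

Lemma mem_W_size (A : finType) n (w : seq A) : w \in W A n -> size w = n.
Proof.
elim: n w => [|n IH] w /=; first by rewrite inE => /eqP ->.
by case/allpairsP => -[w' b] /= [hw _ ->]; rewrite size_rcons (IH _ hw).
Qed.

Section Main3.
Variable A : finType.
Variables (L F : seq A -> Prop).
Hypothesis HFL : forall w, F w -> L w.
Hypothesis HFc : forall a w, F (a :: w) -> F w.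
Hypothesis HFr : forall w b, F (rcons w b) -> F w.
Hypothesis HLc : forall a w, L (a :: w) -> L w.
Hypothesis HLr : forall w b, L (rcons w b) -> L w.
Hypothesis HFextl : forall w, F w -> exists a, F (a :: w).
Hypothesis HFextr : forall w, F w -> exists b, F (rcons w b).
Variable m : nat.
Hypothesis Hac : forall w, F w -> m <= size w -> acyclic_graph (Ew L w).

Notation bF w := (pb (F w)).
Notation bL w := (pb (L w)).

Lemma main_ineq n : m <= n ->
  Bn L F n.+1 + NN L F n + 2 * P F n.+2 + 2 * P F n <= 4 * P F n.+1 + Bn L F n.
Proof.
move=> hn.
have c1 : \sum_(v <- W A n.+1) bF v * lN L F v = \sum_(w <- W A n) S3 (t1 L F) w.
  rewrite sumW_r; apply: eq_bigr => w _; rewrite /S3 exchange_big; apply: eq_bigr => b _.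
  by rewrite /lN big_distrr.
have c2 : \sum_(v <- W A n.+1) bF v * rN L F v = \sum_(w <- W A n) S3 (t2 L F) w.
  rewrite sumW_l; apply: eq_bigr => w _; apply: eq_bigr => a _.
  by rewrite /rN big_distrr.
have c3 : NN L F n = \sum_(w <- W A n) S3 (t3 L F) w.
  rewrite /NN; apply: eq_bigr => w _; rewrite /NNw /S3 big_distrr; apply: eq_bigr => a _.
  by rewrite big_distrr.
have c4 : P F n.+2 = \sum_(w <- W A n) S3 (t4 F) w.
  by rewrite /P sumW_l sumW_r; apply: eq_bigr => w _; rewrite /S3 exchange_big.
have p1 : P F n.+1 = \sum_(w <- W A n) \sum_(a : A) bF (a :: w) by rewrite /P sumW_l.
have p1' : P F n.+1 = \sum_(w <- W A n) \sum_(b : A) bF (rcons w b) by rewrite /P sumW_r.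
have Bs : Bn L F n.+1 = \sum_(v <- W A n.+1) bF v * lN L F v + \sum_(v <- W A n.+1) bF v * rN L F v.
  by rewrite /Bn -big_split; apply: eq_bigr => v _; rewrite mulnDr.
have hsum : \sum_(w <- W A n) (S3 (t1 L F) w + S3 (t2 L F) w + S3 (t3 L F) w + 2 * S3 (t4 F) w + 2 * bF w)
   <= \sum_(w <- W A n) (2 * \sum_(a : A) bF (a :: w) + 2 * \sum_(b : A) bF (rcons w b) + bF w * (lN L F w + rN L F w)).
  rewrite big_seq_cond [X in _ <= X]big_seq_cond; apply: leq_sum => w /andP [hw _].
  apply: (per_w HFL HFc HFr HLc HLr HFextl Hac); by rewrite (mem_W_size hw).
rewrite !big_split /= in hsum.
rewrite !big1_eq in hsum.
rewrite Bs c1 c2 c3 c4 /Bn.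
move: hsum; rewrite -p1 -p1' -/(P F n) -/(Bn L F n); lia.
Qed.

Lemma P_mono n : P F n <= P F n.+1.
Proof.
rewrite /P sumW_r; apply: leq_sum => w _.
case: (pbP (F w)) => // Fw.
have [b Fb] := HFextr Fw.
by rewrite (bigD1 b) //= pbT.
Qed.

End Main3.

Section Sub.
Variable T : Type.
Definition sub (s : seq T) l r := take (r - l) (drop l s).

Lemma size_sub s l r : l <= r -> r <= size s -> size (sub s l r) = r - l.
Proof. move=> h1 h2; rewrite /sub size_takel // size_drop; lia. Qed.

Lemma sub_sub s l r l' r' : l <= l' -> l' <= r' -> r' <= r ->
  sub (sub s l r) (l' - l) (r' - l) = sub s l' r'.
Proof.
move=> h1 h2 h3; rewrite /sub.
have -> : r - l = (r - l') + (l' - l) by lia.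
rewrite -take_drop drop_drop.
have -> : l' - l + l = l' by lia.
have -> : r' - l - (l' - l) = r' - l' by lia.
by rewrite take_takel //; lia.
Qed.

Lemma sub_consl s l r x0 : 0 < l -> l <= r -> r <= size s ->
  sub s l.-1 r = nth x0 s l.-1 :: sub s l r.
Proof.
move=> h1 h2 h3; rewrite /sub (drop_nth x0); last by lia.
have -> : r - l.-1 = (r - l).+1 by lia.
by rewrite /= prednK.
Qed.

Lemma sub_rcons s l r x0 : l <= r -> r < size s ->
  sub s l r.+1 = rcons (sub s l r) (nth x0 s r).
Proof.
move=> h1 h2; rewrite /sub.
have -> : r.+1 - l = (r - l).+1 by lia.
rewrite (take_nth x0) ?size_drop; last by lia.
by rewrite nth_drop; congr (rcons _ (nth _ _ _)); lia.
Qed.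

End Sub.

Lemma config (A : finType) (L F : seq A -> Prop)
  (HLt : forall s l, L s -> L (take l s)) (HLd : forall s l, L s -> L (drop l s))
  (HFt : forall s l, F s -> F (take l s)) (HFd : forall s l, F s -> F (drop l s))
  (Hirr : forall u v, L u -> L v -> exists z, L (u ++ z ++ v))
  u w : L u -> ~ F u -> F w -> L w ->
  exists w' a b, [/\ size w <= size w', F w', L (a :: rcons w' b), ~ F (a :: w') & ~ F (rcons w' b)].
Proof.
move=> Lu Fu Fw Lw.
have [z1 L1] := Hirr _ _ Lu Lw.
have [z2 L2] := Hirr _ _ L1 Lu.
set Wd := (u ++ z1 ++ w) ++ z2 ++ u in L2.
set p := size u + size z1.
set k := size w.
have sW : size Wd = p + k + size z2 + size u by rewrite /Wd !size_cat /p /k; lia.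
have HFsub : forall l r l' r', l <= l' -> l' <= r' -> r' <= r -> F (sub Wd l r) -> F (sub Wd l' r').
  move=> l r l' r' h1 h2 h3 h; rewrite -(sub_sub Wd h1 h2 h3); exact/HFt/HFd.
have Hw : sub Wd p (p + k) = w.
  rewrite /sub.
  have -> : Wd = (u ++ z1) ++ w ++ (z2 ++ u) by rewrite /Wd -!catA.
  by rewrite drop_size_cat ?size_cat // take_size_cat //; lia.
have exl : exists l, (l <= p) && pb (F (sub Wd l (p + k))) by exists p; rewrite leqnn pbT ?Hw.
case: (ex_minnP exl) => l /andP [lp /pbP Fl] lmin.
have exr : exists r, [&& p + k <= r, r <= size Wd & pb (F (sub Wd l r))].
  by exists (p + k); rewrite leqnn pbT //= sW; lia.
have rbound : forall r, [&& p + k <= r, r <= size Wd & pb (F (sub Wd l r))] -> r <= size Wd.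
  by move=> r /and3P [].
case: (ex_maxnP exr rbound) => r /and3P [pr rW /pbP Fr] rmax.
have l1 : 0 < l.
  rewrite lt0n; apply/negP => /eqP l0; rewrite l0 in Fl; apply: Fu.
  have := HFt _ (size u) Fl; rewrite /sub drop0 subn0.
  rewrite take_takel; last by rewrite /p; lia.
  by rewrite /Wd -catA take_size_cat.
have r1 : r < size Wd.
  rewrite ltn_neqAle rW andbT; apply/negP => /eqP rE; apply: Fu.
  have := HFd _ (size Wd - size u - l) Fr; rewrite /sub rE take_oversize ?size_drop // drop_drop.
  have -> : size Wd - size u - l + l = size (((u ++ z1 ++ w) ++ z2)) by rewrite sW !size_cat /p /k; lia.
  have -> : Wd = ((u ++ z1 ++ w) ++ z2) ++ u by rewrite /Wd catA.
  by rewrite drop_size_cat.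
have [x0 _] : exists x0 : A, True by move: r1; case: (Wd) => [|x0 ?] //; exists x0.
exists (sub Wd l r), (nth x0 Wd l.-1), (nth x0 Wd r).
have lr : l <= r by lia.
split.
- by rewrite size_sub //; lia.
- exact: Fr.
- rewrite -(sub_rcons x0 lr r1) -(sub_consl x0 l1); [|lia|lia].
  exact/HLt/HLd.
- rewrite -(sub_consl x0 l1 lr rW) => h.
  have := lmin l.-1; rewrite (leq_trans (leq_pred _) lp) /= pbT.
    by move/(_ isT); lia.
  apply: (HFsub _ _ _ _ _ _ _ h); lia.
- rewrite -(sub_rcons x0 lr r1) => h.
  have := rmax r.+1; rewrite pbT //= (leq_trans pr (leqnSn _)) r1 /=.
  by move/(_ isT); lia.
Qed.

Lemma descent (B NN P : nat -> nat) m :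
  (forall n, m <= n -> B n.+1 + NN n + 2 * P n.+2 + 2 * P n <= 4 * P n.+1 + B n) ->
  (forall n, P n <= P n.+1) ->
  (forall k, exists n, k <= n /\ 0 < NN n) -> False.
Proof.
move=> Hi Hm Hnn.
pose Psi n := B n + 2 * P n.+1 - 2 * P n.
have step : forall n, m <= n -> Psi n.+1 + NN n <= Psi n.
  move=> n hn; have := Hi n hn; have := Hm n; have := Hm n.+1; rewrite /Psi; lia.
have mono : forall d n, m <= n -> Psi (n + d) <= Psi n.
  elim=> [|d IH] n hn; first by rewrite addn0.
  rewrite addnS; apply: leq_trans (IH n hn).
  have := step (n + d); lia.
have key : forall j, exists n, m <= n /\ Psi n + j <= Psi m.
  elim=> [|j [n [hn hj]]]; first by exists m; rewrite addn0.
  have [n' [hn' hnn]] := Hnn n.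
  exists n'.+1; split; first lia.
  have := step n' (leq_trans hn hn').
  have := mono (n' - n) n hn; rewrite subnKC //; lia.
have [n [_ hn]] := key (Psi m).+1; lia.
Qed.

Lemma hard (A : finType) (X : (int -> A) -> Prop) (m : nat) :
  irreducible X -> (forall w, lang X w -> m <= size w -> acyclic_graph (ext_edge X w)) ->
  forall y, X y -> forall u, lang X u -> occ y u.
Proof.
move=> Hirr Hac y Xy u Lu; apply: NNPP => Fu.
have HFL : forall w, occ y w -> lang X w by move=> w h; apply/lang_occ; exists y.
have HFc : forall a w, occ y (a :: w) -> occ y w by move=> a w; apply: occ_cons.
have HFr : forall w b, occ y (rcons w b) -> occ y w by move=> w b; apply: occ_rcons.
have HLc : forall a w, lang X (a :: w) -> lang X w by move=> a w; apply: lang_cons.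
have HLr : forall w b, lang X (rcons w b) -> lang X w by move=> w b; apply: lang_rcons.
have HFextl : forall w, occ y w -> exists a, occ y (a :: w) by move=> w; apply: occ_extl.
have HFextr : forall w, occ y w -> exists b, occ y (rcons w b) by move=> w; apply: occ_extr.
have Hac' : forall w, occ y w -> m <= size w -> acyclic_graph (Ew (lang X) w).
  by move=> w hw hm; apply: Hac => //; apply: HFL.
apply: (@descent (Bn (lang X) (occ y)) (NN (lang X) (occ y)) (P (occ y)) m).
- by move=> n hn; apply: (main_ineq HFL HFc HFr HLc HLr HFextl Hac').
- by move=> n; apply: (P_mono HFextr).
move=> k.
pose w0 := factor y 0 k.
have Fw0 : occ y w0 by exists 0%R; rewrite /w0 size_factor.
have HLt : forall s l, lang X s -> lang X (take l s) by move=> s l /(lang_sub l) [].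
have HLd : forall s l, lang X s -> lang X (drop l s) by move=> s l /(lang_sub l) [].
have HFt : forall s l, occ y s -> occ y (take l s) by move=> s l; apply: occ_take.
have HFd : forall s l, occ y s -> occ y (drop l s) by move=> s l; apply: occ_drop.
have [w' [a [b [hs Fw' Lab Fa Fb]]]] := config HLt HLd HFt HFd Hirr Lu Fu Fw0 (HFL _ Fw0).
exists (size w'); split; first by move: hs; rewrite /w0 size_factor.
apply: leq_trans (sum_ge _ (mem_W (erefl (size w')))).
rewrite (pbT Fw') mul1n /NNw (bigD1 a) //= (bigD1 b) //= (pbT Lab) (pbF Fa) (pbF Fb) /=.
by rewrite -addnA add1n.
Qed.

Section Trans.
Variable A : finType.
Variable Y : (int -> A) -> Prop.
Hypothesis HY : shift_space Y.

Lemma tr_fwd z : Y z -> Y (fun i => z (i + 1)%R).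
Proof. by move=> h; have [_ [h1 _]] := HY; exact: h1. Qed.

Lemma tr_bwd z : Y z -> Y (fun i => z (i - 1)%R).
Proof.
move=> h; have [_ [_ h2]] := HY; have [x' [Yx' ex]] := h2 _ h.
have -> : (fun i => z (i - 1)%R) = x'.
  apply: functional_extensionality => i; rewrite -ex /shift; congr x'; lia.
exact: Yx'.
Qed.

Lemma tr_all z : Y z -> forall k : int, Y (fun i => z (i + k)%R).
Proof.
move=> Yz k.
have pos : forall n : nat, Y (fun i => z (i + n%:Z)%R).
  elim=> [|n IH].
    have -> : (fun i => z (i + 0%:Z)%R) = z by apply: functional_extensionality => i; rewrite GRing.addr0.
    exact: Yz.
  have -> : (fun i => z (i + n.+1%:Z)%R) = (fun i => (fun j => z (j + n%:Z)%R) (i + 1)%R).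
    by apply: functional_extensionality => i; congr z; lia.
  exact: (tr_fwd IH).
have neg : forall n : nat, Y (fun i => z (i - n%:Z)%R).
  elim=> [|n IH].
    have -> : (fun i => z (i - 0%:Z)%R) = z by apply: functional_extensionality => i; rewrite GRing.subr0.
    exact: Yz.
  have -> : (fun i => z (i - n.+1%:Z)%R) = (fun i => (fun j => z (j - n%:Z)%R) (i - 1)%R).
    by apply: functional_extensionality => i; congr z; lia.
  exact: (tr_bwd IH).
case: k => n; first exact: pos.
have -> : (fun i => z (i + Negz n)%R) = (fun i => z (i - n.+1%:Z)%R).
  by apply: functional_extensionality => i; congr z; lia.
exact: neg.
Qed.

End Trans.

Lemma factor_eq (A : finType) (x y : int -> A) a b n :
  (forall k : nat, k < n -> x (a + k%:Z)%R = y (b + k%:Z)%R) -> factor x a n = factor y b n.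
Proof.
move=> h; rewrite /factor; apply/eq_in_map => k; rewrite mem_iota add0n => /andP [_ hk].
exact: h.
Qed.

Lemma irr_min (A : finType) (X : (int -> A) -> Prop) (m : nat) :
  irreducible X -> (forall w, lang X w -> m <= size w -> acyclic_graph (ext_edge X w)) ->
  forall Y : (int -> A) -> Prop, shift_space Y -> (exists y, Y y) ->
    (forall y, Y y -> X y) -> forall x, X x -> Y x.
Proof.
move=> Hirr Hac Y HY [y Yy] YX x Xx.
have [Ycl _] := HY.
apply: Ycl => n.
pose u := factor x (- n%:Z)%R (n + n).+1.
have Lu : lang X u by exists x, (- n%:Z)%R; rewrite /u size_factor.
have [j hj] := hard Hirr Hac (YX _ Yy) Lu.
exists (fun i => y (i + (j + n%:Z))%R); split; first exact: (tr_all HY Yy).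
move=> i hi.
have [k hk] : exists k : nat, (i + n%:Z)%R = (k%:Z)%R by exists `|(i + n%:Z)%R|%N; lia.
have kl : k < (n + n).+1 by lia.
have e1 := nth_factor y j (x 0) kl.
have e2 := nth_factor x (- n%:Z)%R (x 0) kl.
rewrite /u size_factor in hj.
rewrite -hj in e1.
have -> : (i + (j + n%:Z))%R = (j + k%:Z)%R by lia.
rewrite -e1 e2; congr x; lia.
Qed.

Lemma unif_bound (T : finType) (Q : T -> int -> Prop) :
  (forall t M M', Q t M -> (M <= M')%R -> Q t M') ->
  (forall t, exists M, Q t M) -> exists M, forall t, Q t M.
Proof.
move=> Hm Hex.
suff: forall s : seq T, exists M, forall t, t \in s -> Q t M.
  by move=> /(_ (enum T)) [M HM]; exists M => t; apply: HM; rewrite mem_enum.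
elim=> [|t s [M HM]]; first by exists 0%R.
have [Mt HMt] := Hex t.
exists (if (M <= Mt)%R then Mt else M) => t'; rewrite inE => /orP [/eqP ->|ht'].
  by case: ifP => h; [exact: HMt | apply: Hm HMt _; lia].
by case: ifP => h; [apply: Hm (HM _ ht') _ | exact: HM].
Qed.

Section Compact.
Variable A : finType.
Variable x : int -> A.

Definition good (n : nat) (z : int -> A) :=
  forall M : int, exists c : int, (M <= c)%R /\ forall i : int, `|i| < n -> z i = x (c + i)%R.

Definition upd (z : int -> A) (n : nat) (a b : A) : int -> A :=
  fun i => if i == (- n%:Z)%R then a else if i == (n%:Z)%R then b else z i.

Lemma good_step n z : good n z -> exists ab : A * A, good n.+1 (upd z n ab.1 ab.2).
Proof.
move=> Hg; apply: NNPP => H.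
have Hb : forall ab : A * A, exists M, forall c, (M <= c)%R ->
    ~ (forall i : int, `|i| < n.+1 -> upd z n ab.1 ab.2 i = x (c + i)%R).
  move=> ab; apply: NNPP => H1; apply: H; exists ab => M; apply: NNPP => H2; apply: H1.
  by exists M => c hc h3; apply: H2; exists c.
have [M HM] := @unif_bound _ (fun ab M => forall c, (M <= c)%R ->
    ~ (forall i : int, `|i| < n.+1 -> upd z n ab.1 ab.2 i = x (c + i)%R))
  (fun t M M' h hM c hc => h c (Order.le_trans hM hc)) Hb.
have [c [hc hw]] := Hg M.
apply: (HM (x (c - n%:Z)%R, x (c + n%:Z)%R) c hc) => i hi /=.
rewrite /upd; case: eqP => [->|h1]; first by congr x.
case: eqP => [->|h2] //; apply: hw; lia.
Qed.

Lemma ex_gch n z : exists ab : A * A, good n z -> good n.+1 (upd z n ab.1 ab.2).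
Proof.
case: (classic (good n z)) => h.
  by have [ab hab] := good_step h; exists ab.
by exists (x 0%R, x 0%R).
Qed.

Definition gch n z : A * A :=
  proj1_sig (ClassicalEpsilon.constructive_indefinite_description _ (ex_gch n z)).

Lemma gchP n z : good n z -> good n.+1 (upd z n (gch n z).1 (gch n z).2).
Proof. exact: (proj2_sig (ClassicalEpsilon.constructive_indefinite_description _ (ex_gch n z))). Qed.

Fixpoint zs n : int -> A :=
  if n is n'.+1 then upd (zs n') n' (gch n' (zs n')).1 (gch n' (zs n')).2 else (fun _ => x 0%R).

Lemma good_zs n : good n (zs n).
Proof.
elim: n => [|n IH]; last exact: gchP.
by move=> M; exists M; split => // i.
Qed.

Lemma zs_stable n k i : `|i| < n -> zs (n + k) i = zs n i.
Proof.
move=> hi; elim: k => [|k IH]; first by rewrite addn0.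
rewrite addnS /= /upd.
have -> : (i == (- (n + k)%:Z)%R) = false by apply/eqP; lia.
have -> : (i == ((n + k)%:Z)%R) = false by apply/eqP; lia.
exact: IH.
Qed.

Definition ylim (i : int) := zs `|i|.+1 i.

Lemma ylim_zs n i : `|i| < n -> ylim i = zs n i.
Proof.
move=> hi; rewrite /ylim -(subnKC hi) zs_stable //.
Qed.

Lemma good_ylim n : good n ylim.
Proof.
move=> M; have [c [hc hw]] := good_zs n M; exists c; split => // i hi.
by rewrite (ylim_zs hi); apply: hw.
Qed.

End Compact.

Lemma min_irr (A : finType) (X : (int -> A) -> Prop) :
  shift_space X -> minimal X -> irreducible X.
Proof.
move=> HX [_ Hmin] u v [x [i0 [Xx hu]]] [x2 [j2 [Xx2 hv2]]].
apply: NNPP => Hno.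
have Hnot : forall q : int, (i0 + (size u)%:Z <= q)%R -> factor x q (size v) <> v.
  move=> q hq hv; apply: Hno.
  have [d hd] : exists d : nat, q = (i0 + (size u)%:Z + d%:Z)%R by exists `|(q - (i0 + (size u)%:Z))%R|%N; lia.
  rewrite hd in hv.
  exists (factor x (i0 + (size u)%:Z)%R d); exists x, i0; split => //.
  by rewrite !size_cat size_factor !factor_add -hu hv.
have [Xcl [Xf Xb]] := HX.
pose y := ylim x.
have Xy : X y.
  apply: Xcl => n; have [c [_ hw]] := good_ylim x n.+1 0%R.
  exists (fun i => x (i + c)%R); split; first exact: (tr_all HX Xx).
  by move=> i hi; rewrite /y hw ?ltnS // GRing.addrC.
have Hy : forall j, factor y j (size v) <> v.
  move=> j hj.
  have [c [hc hw]] := good_ylim x (`|j| + size v).+1 (i0 + (size u)%:Z - j)%R.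
  apply: (Hnot (c + j)%R); first lia.
  rewrite -[in RHS]hj; apply: factor_eq => k hk; rewrite /y hw; first (congr x; lia).
  lia.
pose Y z := X z /\ forall j, factor z j (size v) <> v.
have HY : shift_space Y.
  split.
    move=> z Hz; split.
      by apply: Xcl => n; have [z' [[Xz' _] hz']] := Hz n; exists z'.
    move=> j hj; have [z' [[_ Hz'] hz']] := Hz (`|j| + size v).
    apply: (Hz' j); rewrite -[in RHS]hj; apply: factor_eq => k hk; apply: hz'; lia.
  split.
    move=> z [Xz Hz]; split; first exact: Xf.
    move=> j hj; apply: (Hz (j + 1)%R); rewrite -[in RHS]hj; apply: factor_eq => k hk.
    by rewrite /shift; congr z; lia.
  move=> z [Xz Hz]; have [x' [Xx' ex]] := Xb z Xz; exists x'; split => //; split => // j hj.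
  apply: (Hz (j - 1)%R); rewrite -[in RHS]hj -ex; apply: factor_eq => k hk.
  by rewrite /shift; congr x'; lia.
have := Hmin Y HY (ex_intro _ y (conj Xy Hy)) (fun z h => h.1) x2 Xx2.
by case=> _ /(_ j2); rewrite -hv2.
Qed.

Unset Implicit Arguments.
Theorem mainTheorem13 (A : finType) (X : (int -> A) -> Prop) :
  shift_space X -> (exists x, X x) -> eventually_dendric X ->
  (minimal X <-> irreducible X).
Proof.
move=> HX Hne [m Hm]; split; first exact: min_irr.
move=> Hirr; split => //.
apply: (irr_min (m := m) Hirr).
by move=> w Lw hw; have [_ h] := Hm w Lw hw.
Qed.

Print Assumptions mainTheorem13.
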